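(* Let $(X,d)$ be a compact metric space and $f:X\to X$ a continuous map. Then $$\mathcal{E}(f_{\mathcal{K}})=h_{top}(f).$$
   Context: $h_{top}(f)$ is the topological entropy of $f$. For $n\in\mathbb{N}$, $d_n(x,y)=\max_{0\le i\le n-1} d(f^ix,f^iy)$. $\mathcal K(X)$ is the space of nonempty closed subsets of $X$ with the Hausdorff metric, and $f_{\mathcal K}(B)=f(B)$. For $A\subset X$ let $A^\varepsilon_n=\{x\in X: d_n(x,A)<\varepsilon\}$, and for $B,C\in\mathcal K(X)$ let $H^n(B,C)=\inf\{\varepsilon>0: B\subset C^\varepsilon_n \text{ and } C\subset B^\varepsilon_n\}$. For nonempty $\mathcal Z\subset\mathcal K(X)$, $N_{\mathcal K}(\mathcal Z,n,\varepsilon)$ is the smallest cardinality of a set $\mathcal G\subset\mathcal K(X)$ such that every $B\in\mathcal Z$ has some $C\in\mathcal G$ with $H^n(B,C)\le\varepsilon$. The entropy order is $\mathcal E(f_{\mathcal K},\mathcal Z)=\lim_{\varepsilon\to0}\limsup_{n\to\infty}\frac{\log\log N_{\mathcal K}(\mathcal Z,n,\varepsilon)}{n}$ (convention $\log 0=0$), and $\mathcal E(f_{\mathcal K}):=\mathcal E(f_{\mathcal K},\mathcal K(X))$. *)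

(* Defs.v *)
From Stdlib Require Import Reals List.
From Coquelicot Require Import Coquelicot.
Open Scope R_scope.

Section MetricDefs.
Context {X : Type} (d : X -> X -> R).

Definition is_metric : Prop :=
  (forall x y, 0 <= d x y) /\
  (forall x y, d x y = 0 <-> x = y) /\
  (forall x y, d x y = d y x) /\
  (forall x y z, d x z <= d x y + d y z).

Definition m_open (U : X -> Prop) : Prop :=
  forall x, U x -> exists r, 0 < r /\ forall y, d x y < r -> U y.

Definition m_closed (A : X -> Prop) : Prop := m_open (fun x => ~ A x).

Definition m_compact : Prop :=
  forall (I : Type) (U : I -> X -> Prop),
    (forall i, m_open (U i)) -> (forall x, exists i, U i x) ->
    exists l : list I, forall x, exists i, In i l /\ U i x.

Definition m_continuous (f : X -> X) : Prop :=
  forall x eps, 0 < eps -> exists delta, 0 < delta /\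
    forall y, d x y < delta -> d (f x) (f y) < eps.

Variable f : X -> X.

Fixpoint dn (n : nat) (x y : X) : R :=
  match n with
  | O => 0
  | S m => Rmax (dn m x y) (d (Nat.iter m f x) (Nat.iter m f y))
  end.

Definition spanning (n : nat) (eps : R) (G : list X) : Prop :=
  forall x, exists y, In y G /\ dn n x y <= eps.

Definition is_min_span_card (n : nat) (eps : R) (m : nat) : Prop :=
  (exists G, length G = m /\ spanning n eps G) /\
  (forall G, spanning n eps G -> (m <= length G)%nat).

(** h_top(f) = lim_{eps->0} limsup_n (1/n) log N(n,eps) (log 0 = 0 as in Stdlib's ln). *)
Definition is_htop (h : Rbar) : Prop :=
  exists N : nat -> R -> nat,
    (forall n eps, 0 < eps -> is_min_span_card n eps (N n eps)) /\
    filterlim (fun eps => LimSup_seq (fun n => ln (INR (N n eps)) / INR n))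
              (at_right 0) (Rbar_locally h).

Definition inK (B : X -> Prop) : Prop := (exists x, B x) /\ m_closed B.

Definition dn_set (n : nat) (x : X) (A : X -> Prop) : Rbar :=
  Glb_Rbar (fun r => exists a, A a /\ r = dn n x a).

Definition nbhd_n (n : nat) (eps : R) (A : X -> Prop) (x : X) : Prop :=
  Rbar_lt (dn_set n x A) eps.

Definition Hn (n : nat) (B C : X -> Prop) : Rbar :=
  Glb_Rbar (fun eps => 0 < eps /\
    (forall x, B x -> nbhd_n n eps C x) /\
    (forall x, C x -> nbhd_n n eps B x)).

Definition K_spanning (Z : (X -> Prop) -> Prop) (n : nat) (eps : R)
    (G : list (X -> Prop)) : Prop :=
  (forall C, In C G -> inK C) /\
  (forall B, Z B -> exists C, In C G /\ Rbar_le (Hn n B C) eps).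

Definition is_min_K_card (Z : (X -> Prop) -> Prop) (n : nat) (eps : R) (m : nat)
  : Prop :=
  (exists G, length G = m /\ K_spanning Z n eps G) /\
  (forall G, K_spanning Z n eps G -> (m <= length G)%nat).

Definition is_entropy_order (Z : (X -> Prop) -> Prop) (e : Rbar) : Prop :=
  exists N : nat -> R -> nat,
    (forall n eps, 0 < eps -> is_min_K_card Z n eps (N n eps)) /\
    filterlim (fun eps => LimSup_seq (fun n => ln (ln (INR (N n eps))) / INR n))
              (at_right 0) (Rbar_locally e).

Definition is_entropy_order_K (e : Rbar) : Prop := is_entropy_order inK e.

End MetricDefs.

(* Main.v *)
Require Import Defs.
From Stdlib Require Import Reals List Lra Lia Classical ClassicalEpsilon.
From Coquelicot Require Import Coquelicot.
Open Scope R_scope.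
Lemma min_exists (P : nat -> Prop) : (exists n, P n) -> exists n, P n /\ forall k, P k -> (n <= k)%nat.
Proof.
  intros [n0 Hn0]. apply NNPP; intro Hno.
  assert (H : forall n k, (k <= n)%nat -> ~ P k).
  { induction n; intros k Hk Pk.
    - apply Hno; exists k; split; auto; intros; lia.
    - destruct (Nat.eq_dec k (S n)).
      + subst. apply Hno; exists (S n); split; auto. intros j Pj.
        destruct (Compare_dec.le_lt_dec (S n) j); auto. exfalso; apply (IHn j); auto; lia.
      + apply (IHn k); auto; lia. }
  apply (H n0 n0); auto.
Qed.

Lemma max_step (P : nat -> Prop) M : P 0%nat -> (forall k, P k -> (k <= M)%nat) -> exists k, P k /\ ~ P (S k).
Proof.
  intros P0 HM. apply NNPP; intro Hno.
  assert (H : forall k, P k). { induction k; auto. apply NNPP; intro. apply Hno; eauto. }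
  specialize (HM (S M) (H _)); lia.
Qed.

Lemma inj_count {A B : Type} (Rl : A -> B -> Prop) (L : list A) (G : list B) :
  NoDup L -> (forall a, In a L -> exists b, In b G /\ Rl a b) ->
  (forall a a' b, In a L -> In a' L -> Rl a b -> Rl a' b -> a = a') ->
  (length L <= length G)%nat.
Proof.
  intros HN Hex Hu. destruct L as [|a0 L0]. simpl; lia.
  destruct (Hex a0 (or_introl eq_refl)) as [b0 _].
  set (g := fun a => epsilon (inhabits b0) (fun b => In a (a0 :: L0) -> In b G /\ Rl a b)).
  assert (Hg : forall a, In a (a0 :: L0) -> In (g a) G /\ Rl a (g a)).
  { intros a Ha. unfold g. apply (epsilon_spec (inhabits b0) (fun b => In a (a0 :: L0) -> In b G /\ Rl a b)); auto.
    destruct (Hex a Ha) as [b Hb]; exists b; auto. }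
  rewrite <- (length_map g). apply NoDup_incl_length.
  - apply NoDup_map_NoDup_ForallPairs; auto. intros a a' Ha Ha' E.
    apply (Hu a a' (g a)); auto. apply Hg; auto. rewrite E; apply Hg; auto.
  - intros b Hb. apply in_map_iff in Hb. destruct Hb as [a [<- Ha]]. apply Hg; auto.
Qed.

Fixpoint nsubs {A : Type} (l : list A) : list (list A) :=
  match l with
  | nil => nil
  | x :: l' => nsubs l' ++ (x :: nil) :: map (cons x) (nsubs l')
  end.

Lemma nsubs_len {A} (l : list A) : S (length (nsubs l)) = (2 ^ length l)%nat.
Proof. induction l; simpl; auto. rewrite length_app; simpl; rewrite length_map. lia. Qed.

Lemma nsubs_incl {A} (l : list A) : forall T, In T (nsubs l) -> forall x, In x T -> In x l.
Proof.
  induction l; simpl; [tauto|]. intros T HT x Hx. apply in_app_or in HT. destruct HT as [H|[H|H]].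
  - right; eauto.
  - subst; simpl in Hx; tauto.
  - apply in_map_iff in H. destruct H as [T0 [<- H0]]. destruct Hx; auto. right; eauto.
Qed.

Lemma nsubs_nonnil {A} (l : list A) : forall T, In T (nsubs l) -> exists x, In x T.
Proof.
  induction l; simpl; [tauto|]. intros T HT. apply in_app_or in HT. destruct HT as [H|[H|H]]; auto.
  - subst; exists a; simpl; auto.
  - apply in_map_iff in H. destruct H as [T0 [<- H0]]. exists a; simpl; auto.
Qed.

Lemma nsubs_pred {A} (l : list A) (P : A -> Prop) : (exists x, In x l /\ P x) ->
  exists T, In T (nsubs l) /\ forall x, In x T <-> In x l /\ P x.
Proof.
  induction l; simpl. intros [x [[] _]].
  intros Hex. destruct (classic (exists x, In x l /\ P x)) as [H|H].
  - destruct (IHl H) as [T [HT HTe]]. destruct (classic (P a)) as [Pa|nPa].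
    + exists (a :: T); split. apply in_or_app; right; right; apply in_map; auto.
      intros x; simpl; rewrite HTe. split. intros [<-|[]]; auto. intros [[<-|Hx] Px]; auto.
    + exists T; split. apply in_or_app; auto. intros x; rewrite HTe. split. intros []; auto.
      intros [[<-|Hx] Px]; tauto.
  - exists (a :: nil); split. apply in_or_app; right; left; auto.
    intros x; simpl. split. intros [<-|[]]. split; auto. destruct Hex as [y [[<-|Hy] Py]]; auto.
    exfalso; eauto.
    intros [[<-|Hx] Px]; auto. exfalso; eauto.
Qed.

Lemma nsubs_uniq {A} (l : list A) : NoDup l -> forall T T', In T (nsubs l) -> In T' (nsubs l) ->
  (forall x, In x T <-> In x T') -> T = T'.
Proof.
  induction l; simpl; [tauto|]. intros HN. inversion HN as [|? ? Hna HN']; subst.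
  assert (Hnot : forall T, In T (nsubs l) -> ~ In a T) by (intros T HT Ha; apply Hna; eapply nsubs_incl; eauto).
  assert (Hcase : forall T, In T (nsubs l ++ (a :: nil) :: map (cons a) (nsubs l)) ->
     In T (nsubs l) \/ exists T0, T = a :: T0 /\ (T0 = nil \/ In T0 (nsubs l))).
  { intros T HT. apply in_app_or in HT. destruct HT as [H|[H|H]]; auto.
    right; exists nil; auto. apply in_map_iff in H. destruct H as [T0 [<- H0]]. right; eauto. }
  intros T T' HT HT' He.
  destruct (Hcase T HT) as [H1|[T0 [-> H1]]]; destruct (Hcase T' HT') as [H2|[T0' [-> H2]]].
  - auto.
  - exfalso; apply (Hnot T H1); apply He; left; auto.
  - exfalso; apply (Hnot T' H2); apply He; left; auto.
  - f_equal.
    assert (He' : forall x, In x T0 <-> In x T0').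
    { assert (N0 : ~ In a T0) by (destruct H1 as [->|H1]; [simpl; auto| apply Hnot; auto]).
      assert (N0' : ~ In a T0') by (destruct H2 as [->|H2]; [simpl; auto| apply Hnot; auto]).
      intros x; split; intros Hx.
      + destruct (proj1 (He x) (or_intror Hx)) as [<-|]; tauto.
      + destruct (proj2 (He x) (or_intror Hx)) as [<-|]; tauto. }
    destruct H1 as [->|H1]; destruct H2 as [->|H2]; auto.
    + destruct (nsubs_nonnil _ _ H2) as [x Hx]. apply He' in Hx; destruct Hx.
    + destruct (nsubs_nonnil _ _ H1) as [x Hx]. apply He' in Hx; destruct Hx.
Qed.

Lemma nsubs_nodup {A} (l : list A) : NoDup l -> NoDup (nsubs l).
Proof.
  induction l; simpl; intros HN. constructor. inversion HN as [|? ? Hna HN']; subst.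
  assert (Hnot : forall T, In T (nsubs l) -> ~ In a T) by (intros T HT Ha; apply Hna; eapply nsubs_incl; eauto).
  apply NoDup_app; auto.
  - constructor.
    + intros H. apply in_map_iff in H. destruct H as [T0 [E H0]]. injection E; intros ->.
      destruct (nsubs_nonnil _ _ H0) as [x []].
    + apply NoDup_map_NoDup_ForallPairs; auto. intros x y _ _ E; injection E; auto.
  - intros T HT [E|E]. subst; apply (Hnot _ HT); simpl; auto.
    apply in_map_iff in E. destruct E as [T0 [<- _]]. apply (Hnot _ HT); simpl; auto.
Qed.
Section S.
Context {X : Type} (d : X -> X -> R) (f : X -> X).
Context (Hd : is_metric d) (Hcpt : m_compact d) (Hf : m_continuous d f).

Lemma d_nonneg x y : 0 <= d x y. Proof. apply Hd. Qed.
Lemma d_sym x y : d x y = d y x. Proof. apply Hd. Qed.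
Lemma d_tri x y z : d x z <= d x y + d y z. Proof. apply Hd. Qed.
Lemma d_refl x : d x x = 0. Proof. apply Hd; reflexivity. Qed.
Lemma d_eq x y : d x y = 0 -> x = y. Proof. apply Hd. Qed.

Lemma dn_nonneg n x y : 0 <= dn d f n x y.
Proof. induction n; simpl. lra. apply Rle_trans with (1:=IHn), Rmax_l. Qed.

Lemma dn_sym n x y : dn d f n x y = dn d f n y x.
Proof. induction n; simpl; auto. rewrite IHn, d_sym; auto. Qed.

Lemma dn_refl n x : dn d f n x x = 0.
Proof. induction n; simpl; auto. rewrite IHn, d_refl. apply Rmax_left; lra. Qed.

Lemma dn_tri n x y z : dn d f n x z <= dn d f n x y + dn d f n y z.
Proof.
  induction n; simpl. lra.
  apply Rmax_lub.
  - eapply Rle_trans. apply IHn. apply Rplus_le_compat; apply Rmax_l.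
  - eapply Rle_trans. apply (d_tri _ (Nat.iter n f y)). apply Rplus_le_compat; apply Rmax_r.
Qed.

Lemma dn_ge n i x y : (i < n)%nat -> d (Nat.iter i f x) (Nat.iter i f y) <= dn d f n x y.
Proof.
  induction n; intros Hi. lia. simpl.
  destruct (Nat.eq_dec i n). subst; apply Rmax_r.
  eapply Rle_trans. apply IHn; lia. apply Rmax_l.
Qed.

Lemma dn_le n x y e : 0 <= e -> (forall i, (i < n)%nat -> d (Nat.iter i f x) (Nat.iter i f y) <= e) -> dn d f n x y <= e.
Proof.
  intros He; induction n; intros H; simpl. auto.
  apply Rmax_lub. apply IHn; intros; apply H; lia. apply H; lia.
Qed.

Lemma iter_cont m y eta : 0 < eta -> exists r, 0 < r /\ forall z, d y z < r -> d (Nat.iter m f y) (Nat.iter m f z) < eta.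
Proof.
  revert eta; induction m; intros eta He; simpl.
  - exists eta; split; auto.
  - destruct (Hf (Nat.iter m f y) eta He) as [del [Hdel H]].
    destruct (IHm del Hdel) as [r [Hr H']].
    exists r; split; auto.
Qed.

Lemma dn_cont n y eta : 0 < eta -> exists r, 0 < r /\ forall z, d y z < r -> dn d f n y z < eta.
Proof.
  intros He; induction n; simpl.
  - exists 1; split; [lra|]; auto.
  - destruct IHn as [r1 [Hr1 H1]]. destruct (iter_cont n y eta He) as [r2 [Hr2 H2]].
    exists (Rmin r1 r2); split. apply Rmin_pos; auto.
    intros z Hz. apply Rmax_lub_lt. apply H1. eapply Rlt_le_trans; [apply Hz| apply Rmin_l].
    apply H2. eapply Rlt_le_trans; [apply Hz| apply Rmin_r].
Qed.

Lemma span_exists n eps : 0 < eps -> exists G, spanning d f n eps G.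
Proof.
  intros He.
  destruct (Hcpt X (fun x y => dn d f n x y < eps)) as [l Hl].
  - intros x y Hy. destruct (dn_cont n y (eps - dn d f n x y)) as [r [Hr H]]. lra.
    exists r; split; auto. intros z Hz. specialize (H z Hz).
    pose proof (dn_tri n x y z). lra.
  - intros x; exists x. rewrite dn_refl; auto.
  - exists l. intros x. destruct (Hl x) as [i [Hi H]]. exists i; split; auto.
    rewrite dn_sym; lra.
Qed.


Lemma glb_le (E : R -> Prop) x : E x -> Rbar_le (Glb_Rbar E) x.
Proof. intros Hx. apply (proj1 (Glb_Rbar_correct E)); auto. Qed.

Lemma glb_lt (E : R -> Prop) (r : R) : Rbar_lt (Glb_Rbar E) r -> exists x, E x /\ x < r.
Proof.
  intros H. apply NNPP; intro Hn. apply (Rbar_lt_not_le _ _ H).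
  apply (proj2 (Glb_Rbar_correct E)). intros x Hx. simpl. apply Rnot_lt_le; intro; apply Hn; eauto.
Qed.

Lemma rbar_le_of_all (l : Rbar) (e : R) : (forall e', e < e' -> Rbar_le l e') -> Rbar_le l e.
Proof.
  intros H. destruct l as [r| |]; simpl.
  - apply Rnot_lt_le; intro Hlt. specialize (H ((r+e)/2) ltac:(lra)); simpl in H; lra.
  - apply (H (e+1)); lra.
  - auto.
Qed.

Lemma dn_set_le n x (C : X -> Prop) c : C c -> Rbar_le (dn_set d f n x C) (dn d f n x c).
Proof. intros Hc. apply glb_le. eauto. Qed.

Lemma Hn_le n (B C : X -> Prop) eps : 0 < eps ->
  (forall b, B b -> exists c, C c /\ dn d f n b c <= eps) ->
  (forall c, C c -> exists b, B b /\ dn d f n c b <= eps) ->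
  Rbar_le (Hn d f n B C) eps.
Proof.
  intros He H1 H2. apply rbar_le_of_all. intros e' He'. apply glb_le.
  split; [lra|split].
  - intros x Hx. destruct (H1 x Hx) as [c [Hc Hd']]. unfold nbhd_n.
    eapply Rbar_le_lt_trans. apply (dn_set_le _ _ _ c Hc). simpl; lra.
  - intros x Hx. destruct (H2 x Hx) as [c [Hc Hd']]. unfold nbhd_n.
    eapply Rbar_le_lt_trans. apply (dn_set_le _ _ _ c Hc). simpl; lra.
Qed.

Lemma Hn_extract n (B C : X -> Prop) (eps e' : R) : Rbar_le (Hn d f n B C) eps -> eps < e' ->
  (forall b, B b -> exists c, C c /\ dn d f n b c < e') /\
  (forall c, C c -> exists b, B b /\ dn d f n c b < e').
Proof.
  intros H He. assert (Hl : Rbar_lt (Hn d f n B C) e') by (apply Rbar_le_lt_trans with (Finite eps); [apply H| simpl; lra]).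
  destruct (glb_lt _ _ Hl) as [e'' [[_ [HB HC]] Hlt]].
  split.
  - intros b Hb. specialize (HB b Hb). unfold nbhd_n, dn_set in HB.
    destruct (glb_lt _ _ HB) as [r [[c [Hc ->]] Hr]]. exists c; split; auto; lra.
  - intros c Hc. specialize (HC c Hc). unfold nbhd_n, dn_set in HC.
    destruct (glb_lt _ _ HC) as [r [[b [Hb ->]] Hr]]. exists b; split; auto; lra.
Qed.

Lemma finite_closed (T : list X) : m_closed d (fun x => In x T).
Proof.
  unfold m_closed, m_open. induction T as [|a T IH]; intros x Hx.
  - exists 1; split; [lra|]; simpl; auto.
  - assert (Hxa : x <> a) by (intro; apply Hx; left; auto).
    assert (Hna : ~ In x T) by (intro; apply Hx; right; auto).
    destruct (IH x Hna) as [r [Hr H]].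
    assert (Hd0 : 0 < d x a).
    { destruct (Rle_lt_or_eq_dec _ _ (d_nonneg x a)); auto. exfalso; apply Hxa, d_eq; auto. }
    exists (Rmin (d x a) r); split. apply Rmin_pos; auto.
    intros y Hy [E|E].
    + subst. pose proof (Rmin_l (d x y) r); lra.
    + apply (H y); auto. eapply Rlt_le_trans; [apply Hy|apply Rmin_r].
Qed.

Lemma finite_inK (T : list X) : (exists x, In x T) -> inK d (fun x => In x T).
Proof. intros H; split; auto. apply finite_closed. Qed.

Lemma Kspan_upper n eps G : 0 < eps -> spanning d f n eps G ->
  exists GK, K_spanning d f (inK d) n eps GK /\ S (length GK) = (2 ^ length G)%nat.
Proof.
  intros He HG. exists (map (fun T x => In x T) (nsubs G)). split.
  2: { rewrite length_map; apply nsubs_len. }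
  split.
  - intros C HC. apply in_map_iff in HC. destruct HC as [T [<- HT]].
    apply finite_inK. eapply nsubs_nonnil; eauto.
  - intros B [[b0 Hb0] HBc].
    destruct (nsubs_pred G (fun g => exists b, B b /\ dn d f n b g <= eps)) as [T [HT HTe]].
    { destruct (HG b0) as [y [Hy Hdy]]. exists y; split; eauto. }
    exists (fun x => In x T). split. apply (in_map (fun T (x : X) => In x T)); auto.
    apply Hn_le; auto.
    + intros b Hb. destruct (HG b) as [y [Hy Hdy]]. exists y; split; auto. apply HTe; eauto.
    + intros c Hc. apply HTe in Hc. destruct Hc as [_ [b [Hb Hdb]]]. exists b; split; auto.
      rewrite dn_sym; auto.
Qed.

Definition sep n del (E : list X) := NoDup E /\ forall x y, In x E -> In y E -> x <> y -> del <= dn d f n x y.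

Lemma sep_bound n del E G : 0 < del -> sep n del E -> spanning d f n (del/3) G -> (length E <= length G)%nat.
Proof.
  intros Hdel [HN Hs] HG. apply (inj_count (fun e g => dn d f n e g <= del/3)); auto.
  intros a a' b Ha Ha' H1 H2. apply NNPP; intro Hne. specialize (Hs a a' Ha Ha' Hne).
    pose proof (dn_tri n a b a'). rewrite (dn_sym n b a') in H. lra.
Qed.

Lemma sep_max n del : 0 < del -> exists E, sep n del E /\ spanning d f n del E.
Proof.
  intros Hdel. destruct (span_exists n (del/3)) as [G HG]. lra.
  destruct (max_step (fun k => exists E, sep n del E /\ length E = k) (length G)) as [k [[E [HE Hk]] Hnot]].
  - exists nil; split; auto. split. constructor. simpl; tauto.
  - intros k [E [HE <-]]. eapply sep_bound; eauto.
  - exists E; split; auto. intros x. apply NNPP; intro Hn.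
    assert (Hfar : forall y, In y E -> del < dn d f n x y).
    { intros y Hy. apply Rnot_le_lt; intro; apply Hn; eauto. }
    apply Hnot. exists (x :: E); split; [|simpl; lia].
    destruct HE as [HN Hs]. split.
    + constructor; auto. intro Hx. specialize (Hfar x Hx). rewrite dn_refl in Hfar. lra.
    + intros a b [<-|Ha] [<-|Hb] Hne.
      * tauto.
      * apply Rlt_le, Hfar; auto.
      * rewrite dn_sym; apply Rlt_le, Hfar; auto.
      * apply Hs; auto.
Qed.

Lemma Kspan_lower n eps E GK : 0 < eps -> sep n (3*eps) E -> K_spanning d f (inK d) n eps GK ->
  (2 ^ length E <= S (length GK))%nat.
Proof.
  intros He [HN Hs] [HGin HG]. rewrite <- nsubs_len. apply le_n_S.
  apply (inj_count (fun T C => Rbar_le (Hn d f n (fun x => In x T) C) eps)).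
  - apply nsubs_nodup; auto.
  - intros T HT. apply HG. apply finite_inK. eapply nsubs_nonnil; eauto.
  - intros T T' C HT HT' H1 H2. apply (nsubs_uniq E HN); auto.
    assert (K : forall T T', In T (nsubs E) -> In T' (nsubs E) ->
              Rbar_le (Hn d f n (fun x => In x T) C) eps -> Rbar_le (Hn d f n (fun x => In x T') C) eps ->
              forall x, In x T -> In x T').
    { clear T T' HT HT' H1 H2. intros T T' HT HT' H1 H2 x Hx.
      apply NNPP; intro Hx'.
      destruct (proj1 (Hn_extract _ _ _ eps (5/4*eps) H1 ltac:(lra)) x Hx) as [c [Hc Hxc]].
      destruct (proj2 (Hn_extract _ _ _ eps (5/4*eps) H2 ltac:(lra)) c Hc) as [t [Ht Hct]].
      assert (Hne : x <> t) by (intros ->; auto).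
      pose proof (Hs x t (nsubs_incl _ _ HT _ Hx) (nsubs_incl _ _ HT' _ Ht) Hne).
      pose proof (dn_tri n x c t). lra. }
    intros x; split; apply K; auto.
Qed.

Lemma choose_list {A : Type} (Q : A -> X -> Prop) (L : list A) :
  exists Y, (length Y <= length L)%nat /\ forall a, In a L -> (exists x, Q a x) -> exists y, In y Y /\ Q a y.
Proof.
  induction L as [|a L [Y [HY H]]].
  - exists nil; split; auto. intros a [].
  - destruct (classic (exists x, Q a x)) as [[x Hx]|Hn].
    + exists (x :: Y); split; simpl; [lia|]. intros b [<-|Hb] Hex; eauto.
      destruct (H b Hb Hex) as [y [Hy Hq]]; eauto.
    + exists Y; split; simpl; [lia|]. intros b [<-|Hb] Hex. tauto. auto.
Qed.

Lemma span_exp n eps M G1 : 0 < eps -> spanning d f 1 (eps/2) G1 -> length G1 = M ->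
  exists Y, (length Y <= M ^ n)%nat /\ spanning d f n eps Y.
Proof.
  intros He HG1 HM.
  set (Rel := fun k (w : nat -> X) x => forall i, (i < k)%nat -> d (Nat.iter i f x) (w i) <= eps/2).
  assert (HW : forall k, exists W, (length W <= M ^ k)%nat /\ forall x, exists w, In w W /\ Rel k w x).
  { induction k as [|k [W [HW Hx]]].
    - destruct (classic (exists x : X, True)) as [[x0 _]|Hno].
      + exists ((fun _ => x0) :: nil); split; simpl; [lia|]. intros x; exists (fun _ => x0); split; auto.
        intros i Hi; lia.
      + exists nil; split; simpl; [lia|]. intros x; exfalso; eauto.
    - exists (flat_map (fun w => map (fun g => fun i => if Nat.eqb i k then g else w i) G1) W). split.
      + rewrite (flat_map_constant_length (c := M)). simpl. rewrite Nat.mul_comm. apply Nat.mul_le_mono_l; auto.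
        intros; rewrite length_map; auto.
      + intros x. destruct (Hx x) as [w [Hw Hr]]. destruct (HG1 (Nat.iter k f x)) as [g [Hg Hdg]].
        exists (fun i => if Nat.eqb i k then g else w i). split.
        * apply in_flat_map. exists w; split; auto. apply in_map_iff; eauto.
        * intros i Hi. destruct (Nat.eqb_spec i k).
          -- subst. eapply Rle_trans; [|apply Hdg]. apply (dn_ge 1 0); lia.
          -- apply Hr; lia. }
  destruct (HW n) as [W [HWl HWx]].
  destruct (choose_list (Rel n) W) as [Y [HY HYq]].
  exists Y; split; [lia|]. intros x. destruct (HWx x) as [w [Hw Hr]].
  destruct (HYq w Hw (ex_intro _ x Hr)) as [y [Hy Hry]]. exists y; split; auto.
  apply dn_le. lra. intros i Hi. specialize (Hr i Hi); specialize (Hry i Hi).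
  pose proof (d_tri (Nat.iter i f x) (w i) (Nat.iter i f y)). rewrite (d_sym (w i)) in H. lra.
Qed.

Definition Nf n eps := epsilon (inhabits 0%nat) (fun m => 0 < eps -> is_min_span_card d f n eps m).
Definition NKf n eps := epsilon (inhabits 0%nat) (fun m => 0 < eps -> is_min_K_card d f (inK d) n eps m).

Lemma Nf_spec n eps : 0 < eps -> is_min_span_card d f n eps (Nf n eps).
Proof.
  intros He. unfold Nf. apply (epsilon_spec (inhabits 0%nat) (fun m => 0 < eps -> is_min_span_card d f n eps m)); auto.
  destruct (min_exists (fun m => exists G, length G = m /\ spanning d f n eps G)) as [m [H1 H2]].
  { destruct (span_exists n eps He) as [G HG]; eauto. }
  exists m; intros _. split; auto. intros G HG. apply H2; eauto.
Qed.

Lemma NKf_spec n eps : 0 < eps -> is_min_K_card d f (inK d) n eps (NKf n eps).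
Proof.
  intros He. unfold NKf. apply (epsilon_spec (inhabits 0%nat) (fun m => 0 < eps -> is_min_K_card d f (inK d) n eps m)); auto.
  destruct (min_exists (fun m => exists G, length G = m /\ K_spanning d f (inK d) n eps G)) as [m [H1 H2]].
  { destruct (span_exists n eps He) as [G HG]. destruct (Kspan_upper n eps G He HG) as [GK [HGK _]]; eauto. }
  exists m; intros _. split; auto. intros G HG. apply H2; eauto.
Qed.

Lemma Nf_mono n e1 e2 : 0 < e1 -> e1 <= e2 -> (Nf n e2 <= Nf n e1)%nat.
Proof.
  intros H1 H2. destruct (Nf_spec n e1 H1) as [[G [HG HGs]] _].
  rewrite <- HG. apply (Nf_spec n e2); [lra|]. intros x; destruct (HGs x) as [y [Hy Hd']]; exists y; split; auto; lra.
Qed.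

Lemma NK_upper n eps : 0 < eps -> (S (NKf n eps) <= 2 ^ Nf n eps)%nat.
Proof.
  intros He. destruct (Nf_spec n eps He) as [[G [HG HGs]] _].
  destruct (Kspan_upper n eps G He HGs) as [GK [HK HL]].
  rewrite <- HG, <- HL. apply le_n_S. apply (NKf_spec n eps He); auto.
Qed.

Lemma NK_lower n eps : 0 < eps -> (2 ^ Nf n (3*eps) <= S (NKf n eps))%nat.
Proof.
  intros He. destruct (sep_max n (3*eps)) as [E [HE HEs]]. lra.
  destruct (NKf_spec n eps He) as [[GK [HGK HKs]] _].
  eapply Nat.le_trans. apply Nat.pow_le_mono_r. lia. apply (Nf_spec n (3*eps)). lra. apply HEs.
  rewrite <- HGK. apply (Kspan_lower n eps); auto.
Qed.

Lemma Nf_exp eps : 0 < eps -> exists M, forall n, (Nf n eps <= M ^ n)%nat.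
Proof.
  intros He. destruct (span_exists 1 (eps/2)) as [G1 HG1]. lra.
  exists (length G1). intros n. destruct (span_exp n eps (length G1) G1 He HG1 eq_refl) as [Y [HY HYs]].
  eapply Nat.le_trans; [|apply HY]. apply (Nf_spec n eps He); auto.
Qed.

End S.
Lemma ln0 : ln 0 = 0.
Proof. unfold ln. destruct (Rlt_dec _ _) as [h|h]; [exfalso; lra|auto]. Qed.

Lemma ln_INR_nonneg k : 0 <= ln (INR k).
Proof.
  destruct k. rewrite INR_0, ln0; lra.
  rewrite <- ln_1. apply ln_le. lra. rewrite S_INR; pose proof (pos_INR k); lra.
Qed.

Lemma ln_INR_mono k k' : (k <= k')%nat -> ln (INR k) <= ln (INR k').
Proof.
  intros H. destruct k. rewrite INR_0, ln0; apply ln_INR_nonneg.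
  apply ln_le. apply lt_0_INR; lia. apply le_INR; auto.
Qed.

Lemma ln2_pos : 0 < ln 2.
Proof. pose proof ln_lt_2; lra. Qed.

Lemma ln2_lt1 : ln 2 < 1.
Proof.
  rewrite <- (ln_exp 1). apply ln_increasing. lra. pose proof (exp_ineq1 1 ltac:(lra)); lra.
Qed.

Definition cst := ln (ln 2 / 2).

Lemma cst_neg : cst < 0.
Proof. unfold cst. rewrite <- ln_1. apply ln_increasing. pose proof ln2_pos; lra. pose proof ln2_lt1; lra. Qed.

Lemma lnln_ge_c K : cst <= ln (ln (INR K)).
Proof.
  pose proof cst_neg. pose proof ln2_pos.
  destruct (Compare_dec.le_lt_dec K 1).
  - assert (ln (INR K) = 0). { destruct K. rewrite INR_0; apply ln0. replace K with 0%nat by lia. rewrite INR_1; apply ln_1. }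
    rewrite H1, ln0; lra.
  - assert (ln 2 <= ln (INR K)). { apply ln_le. lra. replace 2 with (INR 2) by (simpl; lra). apply le_INR; lia. }
    unfold cst. apply ln_le. lra. lra.
Qed.

Lemma lnln_upper K m : (S K <= 2 ^ m)%nat -> ln (ln (INR K)) <= ln (INR m).
Proof.
  intros H. destruct (Compare_dec.le_lt_dec K 1).
  - assert (ln (INR K) = 0). { destruct K. rewrite INR_0; apply ln0. replace K with 0%nat by lia. rewrite INR_1; apply ln_1. }
    rewrite H0, ln0; apply ln_INR_nonneg.
  - assert (H2 : ln 2 <= ln (INR K)). { apply ln_le. lra. replace 2 with (INR 2) by (simpl; lra). apply le_INR; lia. }
    pose proof ln2_pos.
    apply ln_le. lra.
    assert (HK : INR K < 2 ^ m). { rewrite <- (pow_INR 2). apply lt_INR. lia. }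
    assert (ln (INR K) < ln (2 ^ m)). { apply ln_increasing; auto. apply lt_0_INR; lia. }
    rewrite ln_pow in H1 by lra. pose proof ln2_lt1. pose proof (pos_INR m). nra.
Qed.

Lemma lnln_lower K s : (2 ^ s <= S K)%nat -> ln (INR s) + cst <= ln (ln (INR K)).
Proof.
  intros H. destruct (Compare_dec.le_lt_dec s 1).
  - assert (ln (INR s) = 0). { destruct s. rewrite INR_0; apply ln0. replace s with 0%nat by lia. rewrite INR_1; apply ln_1. }
    rewrite H0. pose proof (lnln_ge_c K); lra.
  - destruct s as [|s']. lia.
    assert (Hp : (1 <= 2 ^ s')%nat) by (apply Nat.le_succ_l, Nat.neq_0_lt_0, Nat.pow_nonzero; lia).
    rewrite Nat.pow_succ_r' in H.
    assert (HK : (2 ^ s' <= K)%nat) by lia.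
    assert (HKr : 2 ^ s' <= INR K) by (rewrite <- (pow_INR 2); apply le_INR; auto).
    pose proof ln2_pos.
    assert (H1 : INR s' * ln 2 <= ln (INR K)).
    { rewrite <- ln_pow by lra. apply ln_le; auto. apply pow_lt; lra. }
    assert (Hs : INR (S s') / 2 <= INR s'). { rewrite S_INR. assert (1 <= INR s') by (replace 1 with (INR 1) by auto; apply le_INR; lia). lra. }
    assert (HSpos : 0 < INR (S s')) by (apply lt_0_INR; lia).
    unfold cst. rewrite <- ln_mult by lra.
    apply ln_le. apply Rmult_lt_0_compat; lra. nra.
Qed.

Lemma LimSup_correct u : is_LimSup_seq u (LimSup_seq u).
Proof. unfold LimSup_seq. destruct (ex_LimSup_seq u); simpl; auto. Qed.

Lemma LimSup_lb (u : nat -> R) c : (forall n, (1 <= n)%nat -> c <= u n) -> Rbar_le c (LimSup_seq u).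
Proof. intros H. rewrite <- (LimSup_seq_const c). apply LimSup_le. exists 1%nat; auto. Qed.

Lemma LimSup_ub (u : nat -> R) c : (forall n, (1 <= n)%nat -> u n <= c) -> Rbar_le (LimSup_seq u) c.
Proof. intros H. rewrite <- (LimSup_seq_const c). apply LimSup_le. exists 1%nat; auto. Qed.

Lemma rbar_fin (x : Rbar) (lo hi : R) : Rbar_le lo x -> Rbar_le x hi -> x = Finite (real x).
Proof. destruct x; simpl; intros; try reflexivity; tauto. Qed.

Lemma slack (u v : nat -> R) (lu lv : R) : is_LimSup_seq u lu -> is_LimSup_seq v lv ->
  (forall eta, 0 < eta -> eventually (fun n => u n <= v n + eta)) -> lu <= lv.
Proof.
  intros Hu Hv H. apply Rnot_lt_le; intro Hlt.
  set (eta := mkposreal ((lu - lv)/3) ltac:(lra)).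
  destruct (Hv eta) as [_ [N1 H1]]. destruct (H eta (cond_pos eta)) as [N2 H2].
  destruct (proj1 (Hu eta) (N1 + N2)%nat) as [n [Hn H3]].
  specialize (H1 n ltac:(lia)). specialize (H2 n ltac:(lia)). simpl in *. lra.
Qed.

Lemma div_le_n x y n : x <= y -> x / INR n <= y / INR n.
Proof.
  intros H. unfold Rdiv. apply Rmult_le_compat_r; auto.
  destruct n. rewrite INR_0, Rinv_0; lra. apply Rlt_le, Rinv_0_lt_compat, lt_0_INR; lia.
Qed.

Section Anal.
Variables (N NK : nat -> R -> nat).
Hypothesis Nmono : forall n e1 e2, 0 < e1 -> e1 <= e2 -> (N n e2 <= N n e1)%nat.
Hypothesis Hup : forall n e, 0 < e -> (S (NK n e) <= 2 ^ N n e)%nat.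
Hypothesis Hlow : forall n e, 0 < e -> (2 ^ N n (3*e) <= S (NK n e))%nat.
Hypothesis Hexp : forall e, 0 < e -> exists M, forall n, (N n e <= M ^ n)%nat.

Definition ua e n := ln (INR (N n e)) / INR n.
Definition vb e n := ln (ln (INR (NK n e))) / INR n.
Definition a e := LimSup_seq (ua e).
Definition b e := LimSup_seq (vb e).

Lemma a_fin e : 0 < e -> a e = Finite (real (a e)) /\ 0 <= real (a e).
Proof.
  intros He. destruct (Hexp e He) as [M HM].
  assert (H0 : Rbar_le 0 (a e)).
  { apply LimSup_lb. intros n Hn. unfold ua. apply Rmult_le_pos. apply ln_INR_nonneg.
    apply Rlt_le, Rinv_0_lt_compat, lt_0_INR; lia. }
  assert (H1 : Rbar_le (a e) (ln (INR M))).
  { apply LimSup_ub. intros n Hn. unfold ua.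
    assert (Hn' : 0 < INR n) by (apply lt_0_INR; lia).
    apply Rmult_le_reg_r with (INR n); auto. unfold Rdiv; rewrite Rmult_assoc, Rinv_l by lra.
    rewrite Rmult_1_r. specialize (HM n).
    destruct (N n e) eqn:EN. rewrite INR_0, ln0. pose proof (ln_INR_nonneg M); nra.
    assert (HMp : (0 < M)%nat). { destruct M. rewrite Nat.pow_0_l in HM by lia. lia. lia. }
    rewrite Rmult_comm, <- ln_pow by (apply lt_0_INR; auto). rewrite <- pow_INR.
    apply ln_INR_mono; auto. }
  pose proof (rbar_fin _ _ _ H0 H1) as E. split; auto. rewrite E in H0; simpl in H0; auto.
Qed.

Definition A e := real (a e).
Definition B e := real (b e).

Lemma A_mono e1 e2 : 0 < e1 -> e1 <= e2 -> A e2 <= A e1.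
Proof.
  intros H1 H2. unfold A. destruct (a_fin e1 H1) as [E1 _]. destruct (a_fin e2 ltac:(lra)) as [E2 _].
  assert (Rbar_le (a e2) (a e1)).
  { apply LimSup_le. exists 0%nat. intros n _. unfold ua. apply div_le_n. apply ln_INR_mono; auto. }
  rewrite E1, E2 in H; simpl in H; auto.
Qed.

Lemma b_le_a e : 0 < e -> Rbar_le (b e) (a e).
Proof.
  intros He. apply LimSup_le. exists 0%nat; intros n _. unfold vb, ua. apply div_le_n. apply lnln_upper; auto.
Qed.

Lemma b_fin e : 0 < e -> b e = Finite (B e).
Proof.
  intros He. unfold B. apply (rbar_fin _ cst (A e)).
  2: { pose proof (b_le_a e He) as Hba. rewrite (proj1 (a_fin e He)) in Hba. exact Hba. }
  apply LimSup_lb. intros n Hn. unfold vb.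
  assert (Hn' : 1 <= INR n) by (replace 1 with (INR 1) by auto; apply le_INR; auto).
  pose proof (lnln_ge_c (NK n e)). pose proof cst_neg.
  apply Rmult_le_reg_r with (INR n). lra. unfold Rdiv; rewrite Rmult_assoc, Rinv_l by lra. nra.
Qed.

Lemma B_le_A e : 0 < e -> B e <= A e.
Proof.
  intros He. pose proof (b_le_a e He). rewrite (b_fin e He), (proj1 (a_fin e He)) in H. simpl in H. auto.
Qed.

Lemma A3_le_B e : 0 < e -> A (3*e) <= B e.
Proof.
  intros He. pose proof (LimSup_correct (ua (3*e))) as Hu. pose proof (LimSup_correct (vb e)) as Hv.
  fold (a (3*e)) in Hu. fold (b e) in Hv. rewrite (proj1 (a_fin (3*e) ltac:(lra))) in Hu. rewrite (b_fin e He) in Hv.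
  apply (slack _ _ _ _ Hu Hv). intros eta Heta.
  pose proof cst_neg.
  destruct (INR_unbounded (- cst / eta)) as [N0 HN0].
  exists (S N0). intros n Hn. unfold ua, vb.
  assert (Hn' : INR N0 < INR n) by (apply lt_INR; lia).
  assert (Hnp : 0 < INR n) by (pose proof (pos_INR N0); lra).
  pose proof (lnln_lower _ _ (Hlow n e He)).
  apply Rmult_le_reg_r with (INR n); auto.
  rewrite Rmult_plus_distr_r. unfold Rdiv; rewrite !Rmult_assoc, !Rinv_l by lra. rewrite !Rmult_1_r.
  assert (- cst <= eta * INR n).
  { assert (E: -cst = (-cst/eta) * eta) by (field; lra). rewrite E. nra. }
  lra.
Qed.

Definition Lim := Lub_Rbar (fun r => exists e, 0 < e /\ r = A e).

Lemma squeeze (g : R -> R) : (forall e, 0 < e -> A (3*e) <= g e <= A e) ->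
  filterlim g (at_right 0) (Rbar_locally Lim).
Proof.
  intros Hg P HP. unfold filtermap.
  destruct (Lub_Rbar_correct (fun r => exists e, 0 < e /\ r = A e)) as [Hub Hlub]. fold Lim in Hub, Hlub.
  assert (Key : forall M : R, Rbar_lt M Lim -> exists e0, 0 < e0 /\ M < A e0).
  { intros M HM. apply NNPP; intro Hn. apply (Rbar_lt_not_le _ _ HM). apply Hlub.
    intros x [e [He ->]]. simpl. apply Rnot_lt_le; intro; apply Hn; eauto. }
  assert (Hat : forall e0, 0 < e0 -> (forall y, 0 < y -> y < e0/3 -> P (g y)) -> at_right 0 (fun x => P (g x))).
  { intros e0 He0 H. exists (mkposreal (e0/3) ltac:(lra)). intros y Hy Hpos. apply H; auto.
    change (Rabs (y - 0) < e0/3) in Hy. rewrite Rminus_0_r, Rabs_pos_eq in Hy by lra. auto. }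
  destruct Lim as [l| |] eqn:EL.
  - destruct HP as [eta Heta]. destruct (Key (l - eta)) as [e0 [He0 HA]]. simpl; destruct eta; simpl; lra.
    apply (Hat e0 He0). intros y Hy1 Hy2. apply Heta. change (Rabs (g y - l) < eta).
    destruct (Hg y Hy1). pose proof (A_mono (3*y) e0 ltac:(lra) ltac:(lra)).
    assert (A y <= l) by (apply (Hub (A y)); eauto).
    apply Rabs_def1; lra.
  - destruct HP as [M HM]. destruct (Key M) as [e0 [He0 HA]]. simpl; auto.
    apply (Hat e0 He0). intros y Hy1 Hy2. apply HM.
    destruct (Hg y Hy1). pose proof (A_mono (3*y) e0 ltac:(lra) ltac:(lra)). lra.
  - exfalso. apply (Hub (A 1)). exists 1; split; auto; lra.
Qed.

Lemma lim_a : filterlim (fun e => a e) (at_right 0) (fun P : Rbar -> Prop => Rbar_locally Lim (fun x : R => P (Finite x))).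
Proof.
  intros P HP. destruct (squeeze A (fun e He => conj (A_mono e (3*e) He ltac:(lra)) (Rle_refl _)) _ HP) as [del H].
  exists del. intros y Hy Hpos. unfold filtermap. rewrite (proj1 (a_fin y Hpos)). apply H; auto.
Qed.

Lemma lim_b : filterlim (fun e => b e) (at_right 0) (fun P : Rbar -> Prop => Rbar_locally Lim (fun x : R => P (Finite x))).
Proof.
  intros P HP. destruct (squeeze B (fun e He => conj (A3_le_B e He) (B_le_A e He)) _ HP) as [del H].
  exists del. intros y Hy Hpos. unfold filtermap. rewrite (b_fin y Hpos). apply H; auto.
Qed.

End Anal.

Theorem theorem1p3 (X : Type) (d : X -> X -> R) (f : X -> X)
  (Hd : is_metric d) (Hcpt : m_compact d) (Hf : m_continuous d f) :
  exists L : Rbar, is_entropy_order_K d f L /\ is_htop d f L.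
Proof.
  assert (Hm : forall n e1 e2, 0 < e1 -> e1 <= e2 -> (Nf d f n e2 <= Nf d f n e1)%nat)
    by (intros; eapply Nf_mono; eauto).
  assert (Hu : forall n e, 0 < e -> (S (NKf d f n e) <= 2 ^ Nf d f n e)%nat)
    by (intros; eapply NK_upper; eauto).
  assert (Hl : forall n e, 0 < e -> (2 ^ Nf d f n (3*e) <= S (NKf d f n e))%nat)
    by (intros; eapply NK_lower; eauto).
  assert (He : forall e, 0 < e -> exists M, forall n, (Nf d f n e <= M ^ n)%nat)
    by (intros; eapply Nf_exp; eauto).
  exists (Lim (Nf d f)). split.
  - exists (NKf d f). split.
    + intros; apply NKf_spec; auto.
    + exact (lim_b _ _ Hm Hu Hl He).
  - exists (Nf d f). split.
    + intros; apply Nf_spec; auto.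
    + exact (lim_a _ Hm He).
Qed.
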